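(* Let $p$ be an odd prime, $P,Q\in\mathbb Z_p$ with $PQ\not\equiv0\pmod p$. Then $$U_{\frac{p-1}2}(P,Q)\equiv\frac{2P}Q\Big(\frac Pp\Big)\sum_{k=1}^{[\frac{p+1}4]}\binom{4k-2}{2k-1}\Big(\frac Q{4P^2}\Big)^k\pmod p.$$
   Context: The Lucas sequence $U_n(P,Q)$ is defined by $U_0=0$, $U_1=1$, $U_{n+1}=PU_n-QU_{n-1}$ for $n\ge1$. $[x]$ is the greatest integer $\le x$; $\mathbb Z_p$ is the set of rational numbers whose denominator is not divisible by $p$; $(\frac{\cdot}{p})$ is the Legendre symbol. *)

(* Defs.v *)
From HB Require Import structures.
From mathcomp Require Import all_boot all_order all_algebra.
Set Implicit Arguments. Unset Strict Implicit. Unset Printing Implicit Defensive.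
Import Order.TTheory GRing.Theory Num.Theory.
Local Open Scope ring_scope.

(* Lucas sequence over a ring: lucasUV P Q n = (U_n, U_{n+1}). *)
Fixpoint lucasUV (R : pzRingType) (P Q : R) (n : nat) : R * R :=
  match n with
  | 0%N => (0, 1)
  | n'.+1 => let (u, v) := lucasUV P Q n' in (v, P * v - Q * u)
  end.
Definition lucasU (R : pzRingType) (P Q : R) (n : nat) : R := (lucasUV P Q n).1.

Definition in_Zp_rat (p : nat) (x : rat) : bool := ~~ (p%:Z %| denq x)%Z.

(* x ≡ y (mod p) for x, y ∈ Z_p : x - y ∈ p Z_p. *)
Definition congq (p : nat) (x y : rat) : bool :=
  [&& in_Zp_rat p x, in_Zp_rat p y & (p%:Z %| numq (x - y))%Z].

Definition legendreq (p : nat) (x : rat) : int :=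
  if congq p x 0 then 0
  else if [exists a : 'I_p, congq p ((nat_of_ord a)%:R ^+ 2) x] then 1 else -1.

(* Main.v *)
Require Import Defs.
From HB Require Import structures.
From mathcomp Require Import all_boot all_order all_algebra all_field all_solvable.
From mathcomp Require Import ring lra zify.
Import Order.TTheory GRing.Theory Num.Theory.
Local Open Scope ring_scope.
Local Open Scope nat_scope.
Definition Dd k := (\prod_(i < k) (2 * i + 1))%N.
Definition Oo j := (\prod_(i < j) (2 * (j.+1 + i) + 1))%N.

Lemma DdS k : Dd k.+1 = (Dd k * (2 * k + 1))%N.
Proof. by rewrite /Dd big_ord_recr. Qed.

Lemma Dd_gt0 k : (0 < Dd k)%N.
Proof. elim: k => [|k IH]; first by rewrite /Dd big_ord0.
by rewrite DdS muln_gt0 IH addn1. Qed.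

Lemma fact_double k : ((2 * k)`! = 2 ^ k * k`! * Dd k)%N.
Proof.
elim: k => [|k IH]; first by rewrite /Dd big_ord0.
rewrite (_ : 2 * k.+1 = (2 * k).+2)%N; last by lia.
rewrite !factS IH DdS expnS; ring.
Qed.

Lemma Dd_split j : Dd (2 * j + 1) = (Dd j.+1 * Oo j)%N.
Proof.
rewrite /Dd /Oo (_ : (2 * j + 1 = j.+1 + j)%N); last by lia.
by rewrite big_split_ord.
Qed.

Lemma nat_key j : (Oo j * 2 ^ j.+1 = 'C(4 * j + 2, 2 * j + 1) * j`!)%N.
Proof.
set C := 'C(_, _).
have hC : (C * ((2 * j + 1)`! * (2 * j + 1)`!) = (4 * j + 2)`!)%N.
  have := @bin_fact (4 * j + 2) (2 * j + 1) ltac:(lia).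
  by rewrite (_ : (4 * j + 2 - (2 * j + 1) = 2 * j + 1)%N) //; lia.
have hg : ((4 * j + 2)`! = 2 ^ (2 * j + 1) * (2 * j + 1)`! * Dd (2 * j + 1))%N.
  by rewrite (_ : (4 * j + 2 = 2 * (2 * j + 1))%N) ?fact_double //; lia.
have hf : ((2 * j + 1)`! = 2 ^ j * j`! * Dd j.+1)%N.
  have := fact_double j.+1.
  rewrite (_ : (2 * j.+1 = (2 * j + 1).+1)%N); last by lia.
  rewrite factS expnS factS => h.
  apply/eqP; rewrite -(@eqn_pmul2l (2 * j.+1)) //; apply/eqP.
  rewrite (_ : (2 * j + 1).+1 = 2 * j.+1)%N in h; last by lia.
  rewrite h; ring.
apply/eqP; rewrite -(@eqn_pmul2r ((2 * j + 1)`! * Dd j.+1 * 2 ^ j)); last first.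
  by rewrite !muln_gt0 fact_gt0 Dd_gt0 expn_gt0.
apply/eqP.
have e1 : (C * j`! * ((2 * j + 1)`! * Dd j.+1 * 2 ^ j) = C * ((2 * j + 1)`! * (2 * j + 1)`!))%N.
  transitivity (C * ((2*j+1)`! * (2^j * j`! * Dd j.+1)))%N; first ring.
  by rewrite -hf.
rewrite e1 hC hg Dd_split.
rewrite [in 2 ^ (2 * j + 1)](_ : (2 * j + 1 = (j + j).+1)%N); last by lia.
rewrite !expnS expnD; ring.
Qed.

Local Open Scope ring_scope.

Lemma ffact_F p m j : prime p -> p = (2 * m + 3)%N -> (2 * j <= m)%N ->
  (('C(m - j, j) * j`!)%:R : 'F_p) * 2 ^+ j = (-1) ^+ j * (Oo j)%:R.
Proof.
move=> pp hp hj.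
rewrite bin_ffact ffact_prod /Oo !natr_prod.
have -> : (2 : 'F_p) ^+ j = \prod_(i < j) 2.
  by rewrite prodr_const card_ord.
have -> : (-1 : 'F_p) ^+ j = \prod_(i < j) (-1).
  by rewrite prodr_const card_ord.
rewrite -!big_split /=; apply: eq_bigr => i _.
have hi := ltn_ord i.
have e : ((m - j - i) * 2 + (2 * (j.+1 + i) + 1))%N = p by lia.
have : ((m - j - i) * 2 + (2 * (j.+1 + i) + 1))%:R = 0 :> 'F_p by rewrite e pchar_Fp_0.
rewrite natrD natrM => /eqP; rewrite addr_eq0 => /eqP ->.
by rewrite mulN1r.
Qed.

Lemma fact_F p j : prime p -> (j < p)%N -> (j`!%:R : 'F_p) != 0.
Proof.
move=> pp; elim: j => [|j IH] hj; first by rewrite oner_eq0.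
rewrite factS natrM mulf_neq0 ?IH //; last by apply: ltnW.
rewrite -(dvdn_pcharf (pchar_Fp pp)); apply/negP => /dvdn_leq; lia.
Qed.

Lemma binom_F p m j : prime p -> p = (2 * m + 3)%N -> (2 * j <= m)%N ->
  ('C(m - j, j)%:R : 'F_p) * 2 ^+ (2 * j + 1) = (-1) ^+ j * 'C(4 * j + 2, 2 * j + 1)%:R.
Proof.
move=> pp hp hj.
have f0 := @fact_F p j pp ltac:(lia).
apply: (mulIf f0).
have h := @ffact_F p m j pp hp hj.
rewrite natrM in h.
have k := nat_key j.
have : ((Oo j * 2 ^ j.+1)%:R : 'F_p) = ('C(4 * j + 2, 2 * j + 1) * j`!)%:R by rewrite k.
rewrite !natrM natrX => k'.
rewrite -[RHS]mulrA -k' (_ : (2 * j + 1 = j + j.+1)%N); last by lia.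
rewrite exprD.
transitivity ('C(m - j, j)%:R * j`!%:R * 2 ^+ j * (2 : 'F_p) ^+ j.+1); first ring.
rewrite h; ring.
Qed.
Definition red (p : nat) (x : rat) : 'F_p := (numq x)%:~R / (denq x)%:~R.
Definition Rel p x (u : 'F_p) := in_Zp_rat p x /\ red p x = u.

Lemma Fp_int0 p (z : int) : prime p -> ((z%:~R : 'F_p) == 0) = (p%:Z %| z)%Z.
Proof. by move=> pp; rewrite (dvdz_pcharf (pchar_Fp pp)). Qed.

Lemma Rel_frac p x (a b : int) : prime p -> x * b%:~R = a%:~R -> ~~ (p%:Z %| b)%Z ->
  Rel p x (a%:~R / b%:~R).
Proof.
move=> pp hx hb.
have b0 : b != 0 by apply: contra hb => /eqP ->; rewrite dvdz0.
have e : numq x * b = a * denq x.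
  apply: (@intr_inj rat); rewrite !intrM numqE -hx; ring.
have hd : ~~ (p%:Z %| denq x)%Z.
  apply/negP => hd.
  have : (p %| `|numq x| * `|b|)%N.
    by rewrite -abszM e abszM dvdn_mull.
  have hb' : ~~ (p %| `|b|)%N := hb.
  have hd' : (p %| `|denq x|)%N := hd.
  rewrite Euclid_dvdM // (negbTE hb') orbF => hn.
  have := coprime_num_den x; rewrite /coprime => /eqP g.
  have : (p %| gcdn `|numq x| `|denq x|)%N by rewrite dvdn_gcd hn hd'.
  by rewrite g dvdn1 => /eqP p1; rewrite p1 in pp.
split=> //.
rewrite /red.
have d0 : ((denq x)%:~R : 'F_p) != 0 by rewrite Fp_int0.
have b0' : (b%:~R : 'F_p) != 0 by rewrite Fp_int0.
have e' : ((numq x)%:~R : 'F_p) * b%:~R = a%:~R * (denq x)%:~R by rewrite -!intrM e.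
have -> : ((numq x)%:~R : 'F_p) = a%:~R * (denq x)%:~R / b%:~R by rewrite -e' mulfK.
by field; apply/andP.
Qed.

Lemma Rel_int p (z : int) : prime p -> Rel p z%:~R z%:~R.
Proof.
move=> pp; have h := @Rel_frac p z%:~R z 1 pp.
move: h; rewrite (_ : (1%:~R : 'F_p) = 1) // (_ : (1%:~R:rat) = 1) // mulr1 divr1; apply => //.
by change (~~ (p %| 1)%N); rewrite dvdn1; apply/eqP => p1; rewrite p1 in pp.
Qed.

Lemma Rel_nat p n : prime p -> Rel p n%:R n%:R.
Proof. by move=> pp; have := @Rel_int p n%:Z pp; rewrite !pmulrn. Qed.

Lemma Rel_Zp p (pp : prime p) x u : Rel p x u ->
  [/\ x * (denq x)%:~R = (numq x)%:~R, ~~ (p%:Z %| denq x)%Z,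
      ((denq x)%:~R : 'F_p) != 0 & u = (numq x)%:~R / (denq x)%:~R].
Proof.
case=> hz <-; split=> //; first by rewrite numqE.
by rewrite Fp_int0.
Qed.

Lemma ndvd_mul p (a b : int) : prime p -> ~~ (p%:Z %| a)%Z -> ~~ (p%:Z %| b)%Z -> ~~ (p%:Z %| a * b)%Z.
Proof.
move=> pp ha hb; change (~~ (p %| `|(a * b)%R|)%N); rewrite abszM Euclid_dvdM //.
by rewrite negb_or; apply/andP; split.
Qed.

Lemma Rel_add p x y u v : prime p -> Rel p x u -> Rel p y v -> Rel p (x + y) (u + v).
Proof.
move=> pp /(@Rel_Zp p pp _ _) [hx dx dx0 ->] /(@Rel_Zp p pp _ _) [hy dy dy0 ->].
have := @Rel_frac p (x + y) (numq x * denq y + numq y * denq x) (denq x * denq y) pp.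
rewrite !intrD !intrM -hx -hy.
have -> : ((numq x)%:~R * (denq y)%:~R + (numq y)%:~R * (denq x)%:~R) / ((denq x)%:~R * (denq y)%:~R)
   = (numq x)%:~R / (denq x)%:~R + (numq y)%:~R / (denq y)%:~R :> 'F_p.
  by field; apply/andP.
apply; first ring.
exact: ndvd_mul.
Qed.

Lemma Rel_mul p x y u v : prime p -> Rel p x u -> Rel p y v -> Rel p (x * y) (u * v).
Proof.
move=> pp /(@Rel_Zp p pp _ _) [hx dx dx0 ->] /(@Rel_Zp p pp _ _) [hy dy dy0 ->].
have := @Rel_frac p (x * y) (numq x * numq y) (denq x * denq y) pp.
rewrite !intrM -hx -hy.
have -> : ((numq x)%:~R * (numq y)%:~R) / ((denq x)%:~R * (denq y)%:~R)
   = (numq x)%:~R / (denq x)%:~R * ((numq y)%:~R / (denq y)%:~R) :> 'F_p.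
  by field; apply/andP.
apply; first ring.
exact: ndvd_mul.
Qed.

Lemma Rel_opp p x u : prime p -> Rel p x u -> Rel p (- x) (- u).
Proof.
move=> pp /(@Rel_Zp p pp _ _) [hx dx dx0 ->].
have := @Rel_frac p (- x) (- numq x) (denq x) pp.
rewrite !intrN -hx !mulNr; apply => //.
Qed.

Lemma Rel_sub p x y u v : prime p -> Rel p x u -> Rel p y v -> Rel p (x - y) (u - v).
Proof. by move=> pp hx hy; apply: Rel_add => //; apply: Rel_opp. Qed.

Lemma Rel_inv p x u : prime p -> Rel p x u -> u != 0 -> Rel p x^-1 u^-1.
Proof.
move=> pp /(@Rel_Zp p pp _ _) [hx dx dx0 ->] u0.
have n0 : ((numq x)%:~R : 'F_p) != 0 by apply: contra u0 => /eqP ->; rewrite mul0r.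
have x0 : x != 0 by apply: contra n0 => /eqP x0; by rewrite x0.
have := @Rel_frac p x^-1 (denq x) (numq x) pp.
rewrite invf_div; apply; last by rewrite -Fp_int0.
by rewrite -hx mulrA mulVf ?mul1r.
Qed.

Lemma Rel_exp p x u n : prime p -> Rel p x u -> Rel p (x ^+ n) (u ^+ n).
Proof.
move=> pp h; elim: n => [|n IH]; first by rewrite !expr0; exact: (@Rel_nat p 1 pp).
by rewrite !exprS; apply: Rel_mul.
Qed.

Lemma Rel_0 p : prime p -> Rel p 0 0.
Proof. by move=> pp; exact: (@Rel_nat p 0 pp). Qed.

Lemma Rel_sum p (I : Type) (r : seq I) (P : pred I) (f : I -> rat) (g : I -> 'F_p) :
  prime p -> (forall i, P i -> Rel p (f i) (g i)) ->
  Rel p (\sum_(i <- r | P i) f i) (\sum_(i <- r | P i) g i).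
Proof.
move=> pp h; apply: (big_ind2 (fun a b => Rel p a b)) => //.
- exact: Rel_0.
- by move=> *; apply: Rel_add.
Qed.

Lemma Rel_congq p x y u v : prime p -> Rel p x u -> Rel p y v -> congq p x y = (u == v).
Proof.
move=> pp hx hy; have := @Rel_sub _ _ _ _ _ pp hx hy.
move=> /(@Rel_Zp p pp _ _) [_ _ d0 e].
rewrite /congq (proj1 hx) (proj1 hy) /= -subr_eq0 e mulf_eq0 invr_eq0 (negbTE d0) orbF.
by rewrite Fp_int0.
Qed.
Lemma lucas_rec (R : pzRingType) (P Q : R) n :
  lucasU P Q n.+2 = P * lucasU P Q n.+1 - Q * lucasU P Q n.
Proof.
rewrite /lucasU /=; case: (lucasUV P Q n) => u v /=; by [].
Qed.

Lemma lucas01 (R : pzRingType) (P Q : R) : lucasU P Q 0 = 0 /\ lucasU P Q 1 = 1.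
Proof. by []. Qed.

Definition W (R : comPzRingType) (x : R) N m := \sum_(j < N) ('C(m - j, j))%:R * x ^+ j.
Arguments W {R}.

Lemma W_ext (R : comPzRingType) (x : R) m N : (m < N)%N -> W x N m = W x m.+1 m.
Proof.
elim: N => [//|N IH] hN.
case: (ltngtP m N) => [h||e]; last by rewrite e.
- rewrite /W big_ord_recr /= -/(W x N m) IH //.
  rewrite (_ : m - N = 0)%N; last by lia.
  by rewrite bin0n (_ : (N == 0)%N = false) ?mul0r ?addr0 //; lia.
- lia.
Qed.

Lemma W_rec (R : comPzRingType) (x : R) m :
  W x m.+3 m.+2 = W x m.+2 m.+1 + x * W x m.+1 m.
Proof.
rewrite -(@W_ext _ x m m.+2) // -(@W_ext _ x m.+1 m.+3) //.
rewrite /W big_ord_recl [in X in _ = X + _]big_ord_recl /= !subn0 !bin0 -addrA.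
rewrite mulr_sumr -big_split /=; congr (_ + _).
apply: eq_bigr => i _; rewrite /bump /= !add1n !subSS.

case: (leqP i m) => hi.
  by rewrite subSn // binS natrD mulrDl exprS; ring.
rewrite (_ : m - i = 0)%N; last by lia.
rewrite (_ : m.+1 - i = 0)%N; last by lia.
rewrite !bin0n (_ : (i.+1 == 0)%N = false) // (_ : (nat_of_ord i == 0)%N = false); last by lia.
by rewrite !mul0r !mulr0 addr0.
Qed.

Lemma lucas_expand (R : comPzRingType) (P Q x : R) m : P ^+ 2 * x = - Q ->
  lucasU P Q m.+1 = P ^+ m * W x m.+1 m.
Proof.
move=> hx.
have: lucasU P Q m.+1 = P ^+ m * W x m.+1 m /\ lucasU P Q m.+2 = P ^+ m.+1 * W x m.+2 m.+1.
  elim: m => [|m [IH1 IH2]].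
    rewrite /W !big_ord_recr !big_ord0 /=; split; rewrite /lucasU /= !subn0 ?subnn !bin0 ?bin0n /=; ring.
  split=> //; rewrite lucas_rec IH1 IH2 W_rec.
  transitivity (P ^+ m.+2 * W x m.+2 m.+1 + (P ^+ 2 * x) * P ^+ m * W x m.+1 m).
    by rewrite hx !exprS; ring.
  rewrite !exprS; ring.
by case.
Qed.
Lemma Fp_ord p (w : 'F_p) : prime p -> exists a : 'I_p, (nat_of_ord a)%:R = w.
Proof.
move=> pp.
have hw : (w < p)%N by have := ltn_ord w; rewrite [in X in (_ < X)%N -> _]Fp_cast.
exists (Ordinal hw); apply: ord_inj; rewrite val_Fp_nat //= modn_small //.
Qed.

Lemma fermat p (w : 'F_p) : prime p -> w != 0 -> w ^+ (p.-1) = 1.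
Proof.
move=> pp w0; have := expf_card w; rewrite card_Fp // => h.
have p0 := prime_gt0 pp.
apply: (mulfI w0); by rewrite -exprS prednK // h mulr1.
Qed.

Lemma euler p (u : 'F_p) : prime p -> odd p -> u != 0 ->
  u ^+ ((p - 1) %/ 2) =
  if [exists a : 'I_p, ((nat_of_ord a)%:R : 'F_p) ^+ 2 == u] then 1 else -1.
Proof.
move=> pp op u0.
set n := ((p - 1) %/ 2)%N.
have p3 : (2 < p)%N.
  have := prime_gt1 pp; rewrite leq_eqVlt => /orP [/eqP p2|//].
  by rewrite -p2 in op.
have hp : p.-1 = (2 * n)%N.
  rewrite /n; have := odd_double_half p; rewrite op; lia.
case: ifP => [/existsP [a /eqP hu] | nsq].
  rewrite -hu in u0 *.
  have a0 : ((nat_of_ord a)%:R : 'F_p) != 0.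
    by apply: contra u0 => /eqP ->; rewrite expr0n.
  by rewrite -exprM -hp fermat.
pose rs := [seq w <- enum 'F_p | w != 0].
have ur : uniq rs by rewrite filter_uniq ?enum_uniq.
have szr : size rs = p.-1.
  have -> : p.-1 = #|predC1 (0 : 'F_p)| by rewrite cardC1 card_Fp.
  rewrite cardE /rs enumT /enum_mem; congr size; apply: eq_filter => w /=.
have allr : all (p.-1).-unity_root rs.
  apply/allP => w; rewrite mem_filter => /andP [w0 _].
  by rewrite unity_rootE (@fermat p w pp w0).
have n0 : (0 < n)%N by rewrite /n; lia.
have p10 : (0 < p.-1)%N by rewrite hp; lia.
have := @has_prim_root _ p.-1 rs p10 allr ur ltac:(by rewrite szr).
case/hasP => z _ pz.
have [i hi] := prim_rootP pz (@fermat p u pp u0).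
have zn : z ^+ n = -1.
  have : (z ^+ n) ^+ 2 == 1 by rewrite -exprM mulnC -hp (prim_expr_order pz).
  rewrite sqrf_eq1 => /orP [|/eqP //].
  by rewrite -(prim_order_dvd pz) hp => /dvdn_leq; lia.
case/boolP: (odd i) => oi.
  by rewrite hi -exprM mulnC exprM zn -signr_odd oi.
exfalso; move/negbT/negP: nsq; apply.
have [a ha] := @Fp_ord p (z ^+ (i %/ 2)) pp.
apply/existsP; exists a; rewrite ha hi -exprM.
by rewrite {2}(divn_eq i 2) modn2 (negbTE oi) addn0 mulnC.
Qed.

Lemma Rel_lucas p P Q u v n : prime p -> Rel p P u -> Rel p Q v ->
  Rel p (lucasU P Q n) (lucasU u v n).
Proof.
move=> pp hP hQ.
suff : Rel p (lucasUV P Q n).1 (lucasUV u v n).1 /\ Rel p (lucasUV P Q n).2 (lucasUV u v n).2.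
  by case.
elim: n => [|n [IH1 IH2]] /=.
  by split; [exact: Rel_0 | exact: (@Rel_nat p 1 pp)].
move: IH1 IH2; case: (lucasUV P Q n) => a b; case: (lucasUV u v n) => c d /= h1 h2.
split=> //.
by apply: Rel_sub => //; apply: Rel_mul.
Qed.

Lemma nat_facts p : prime p -> odd p -> exists m,
  [/\ ((p - 1) %/ 2 = m.+1)%N, p = (2 * m + 3)%N, ((p + 1) %/ 4 <= m.+1)%N,
      (forall j, j < (p + 1) %/ 4 -> 2 * j <= m)%N &
      (forall j, (p + 1) %/ 4 <= j -> m - j < j)%N].
Proof.
move=> pp op.
have p3 : (2 < p)%N.
  have := prime_gt1 pp; rewrite leq_eqVlt => /orP [/eqP p2|//].
  by rewrite -p2 in op.
have := odd_double_half p; rewrite op => hp.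
exists (p./2.-1); split; try lia.
Qed.

Lemma nat_ne0_F p k : prime p -> (0 < k < p)%N -> (k%:R : 'F_p) != 0.
Proof.
move=> pp hk; rewrite -(dvdn_pcharf (pchar_Fp pp)); apply/negP => /dvdn_leq; lia.
Qed.

Lemma F_identity p (u v : 'F_p) : prime p -> odd p -> u != 0 -> v != 0 ->
  lucasU u v ((p - 1) %/ 2) =
  2 * u / v * u ^+ ((p - 1) %/ 2) *
     \sum_(1 <= k < ((p + 1) %/ 4).+1)
        ('C(4 * k - 2, 2 * k - 1))%:R * (v / (4 * u ^+ 2)) ^+ k.
Proof.
move=> pp op u0 v0.
have [m [hn hp hK hlt hge]] := @nat_facts p pp op.
rewrite hn.
set K := ((p + 1) %/ 4)%N.
have two0 : (2 : 'F_p) != 0.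
  by apply: nat_ne0_F => //; rewrite hp addn3 ltnS ltnS leq0n.
have four0 : (4 : 'F_p) != 0.
  by rewrite (_ : (4 : 'F_p) = 2 * 2) ?mulf_neq0 //; ring.
rewrite (@lucas_expand _ u v (- v / u ^+ 2)); last by field.
rewrite big_add1 /= big_mkord.
have -> : W (- v / u ^+ 2) m.+1 m = \sum_(j < K) ('C(m - j, j))%:R * (- v / u ^+ 2) ^+ j.
  rewrite /W (big_ord_widen _ (fun j => ('C(m - j, j))%:R * (- v / u ^+ 2) ^+ j) hK).
  rewrite [RHS]big_mkcond /=; apply: eq_bigr => i _.
  case: ifP => // /negbT; rewrite -leqNgt => hi.
  by rewrite bin_small ?mul0r //; apply: hge.
rewrite !mulr_sumr; apply: eq_bigr => j _.
have hj := hlt _ (ltn_ord j).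
have hb := @binom_F p m j pp hp hj.
rewrite (_ : (4 * j.+1 - 2 = 4 * j + 2)%N); last by lia.
rewrite (_ : (2 * j.+1 - 1 = 2 * j + 1)%N); last by lia.
have -> : ('C(4 * j + 2, 2 * j + 1)%:R : 'F_p) = (-1) ^+ j * ('C(m - j, j)%:R * 2 ^+ (2 * j + 1)).
  by rewrite hb mulrA -exprD -signr_odd addnn odd_double expr0 mul1r.
rewrite (_ : (2 * j + 1 = j.*2.+1)%N); last by lia.
have e1 : (- v / u ^+ 2) ^+ j = (-1) ^+ j * v ^+ j / (u ^+ j) ^+ 2.
  by rewrite exprMn exprVn exprAC [(- v) ^+ j]exprNn.
have e2 : (2 : 'F_p) ^+ j.*2.+1 = 2 * (4 ^+ j).
  by rewrite exprS -mul2n exprM (_ : (2 : 'F_p) ^+ 2 = 4) //; rewrite expr2; ring.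
have e3 : (v / (4 * u ^+ 2)) ^+ j.+1 = v * v ^+ j / (4 * 4 ^+ j * (u ^+ 2 * (u ^+ j) ^+ 2)).
  rewrite exprMn exprVn exprMn [(u ^+ 2) ^+ _]exprS exprAC !exprS; ring.
rewrite e1 e2 e3 [u ^+ m.+1]exprS !expr2.
set c := ('C(m - j, j))%:R.
have uj : u ^+ j != 0 by rewrite expf_neq0.
have fj : (4 : 'F_p) ^+ j != 0 by rewrite expf_neq0.
field.
by rewrite uj fj u0 v0 four0.
Qed.

Arguments Rel_mul {p x y u v}.
Arguments Rel_0 {p}.
Arguments Rel_exp {p x u} n.
Arguments Rel_inv {p x u}.

Theorem lemma3p2 (p : nat) (P Q : rat) :
  prime p -> odd p -> in_Zp_rat p P -> in_Zp_rat p Q -> ~~ congq p (P * Q) 0 ->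
  congq p (lucasU P Q ((p - 1) %/ 2))
    (2 * P / Q * (legendreq p P)%:~R *
     \sum_(1 <= k < ((p + 1) %/ 4).+1)
        ('C(4 * k - 2, 2 * k - 1))%:R * (Q / (4 * P ^+ 2)) ^+ k).
Proof.
move=> pp op hP hQ hPQ.
have RP : Rel p P (red p P) by [].
have RQ : Rel p Q (red p Q) by [].
set u := red p P in RP *; set v := red p Q in RQ *.
have uv0 : u * v != 0.
  by rewrite -(@Rel_congq p (P * Q) 0 (u * v) 0 pp (Rel_mul pp RP RQ) (Rel_0 pp)).
have u0 : u != 0 by apply: contra uv0 => /eqP ->; rewrite mul0r.
have v0 : v != 0 by apply: contra uv0 => /eqP ->; rewrite mulr0.
have two0 : (2 : 'F_p) != 0.
  apply: nat_ne0_F => //; have := prime_gt1 pp; rewrite leq_eqVlt => /orP [/eqP p2|//].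
  by rewrite -p2 in op.
have four0 : (4 : 'F_p) != 0.
  by rewrite (_ : (4 : 'F_p) = 2 * 2) ?mulf_neq0 //; ring.
have hleg : ((legendreq p P)%:~R : 'F_p) = u ^+ ((p - 1) %/ 2).
  rewrite euler // /legendreq (@Rel_congq p P 0 u 0 pp RP (Rel_0 pp)) (negbTE u0).
  have -> : [exists a : 'I_p, congq p ((nat_of_ord a)%:R ^+ 2) P] =
            [exists a : 'I_p, ((nat_of_ord a)%:R : 'F_p) ^+ 2 == u].
    apply: eq_existsb => a.
    exact: (@Rel_congq p _ _ _ _ pp (Rel_exp 2 pp (@Rel_nat p a pp)) RP).
  by case: ifP.
rewrite (@Rel_congq p _ _ (lucasU u v ((p - 1) %/ 2))
   (2 * u / v * u ^+ ((p - 1) %/ 2) *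
     \sum_(1 <= k < ((p + 1) %/ 4).+1)
        ('C(4 * k - 2, 2 * k - 1))%:R * (v / (4 * u ^+ 2)) ^+ k) pp).
- by rewrite F_identity.
- exact: Rel_lucas.
rewrite -hleg.
apply: Rel_mul => //; first apply: Rel_mul => //.
- apply: Rel_mul => //; last exact: Rel_inv.
  by apply: Rel_mul => //; exact: (@Rel_nat p 2 pp).
- exact: Rel_int.
apply: Rel_sum => // k _.
apply: Rel_mul => //; first exact: Rel_nat.
apply: Rel_exp => //; apply: Rel_mul => //.
apply: Rel_inv => //; last by rewrite mulf_neq0 ?expf_neq0.
apply: Rel_mul => //; first exact: (@Rel_nat p 4 pp).
exact: Rel_exp.
Qed.
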